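(* Let $n\ge 1$ and $\pi\in S_n$. Then $\pi\in\mathcal C_n(321)$ if and only if $\hat\pi_1=n$ and $\hat\pi$ avoids each of the five vincular patterns $\underline{32}\,\underline{41}$, $\underline{14}\,\underline{23}$, $\underline{41}\,\underline{32}$, $\underline{23}\,\underline{14}$, $\underline{23}\,\underline{1}$. Equivalently, $$\mathcal C_n(321)=\theta^{-1}\big(S_{n,n}(\underline{32}\,\underline{41},\ \underline{14}\,\underline{23},\ \underline{41}\,\underline{32},\ \underline{23}\,\underline{14},\ \underline{23}\,\underline{1})\big),$$ where $S_{n,n}(\dots)$ is the set of permutations $w\in S_n$ with $w_1=n$ avoiding all listed patterns.
   Context: Permutations of $[n]=\{1,\dots,n\}$ are written in one-line notation $\pi=\pi_1\cdots\pi_n$ with $\pi_i=\pi(i)$. A permutation contains $321$ if there are $i<j<k$ with $\pi_i>\pi_j>\pi_k$, and avoids $321$ otherwise. $\mathcal C_n$ is the set of cyclic permutations of $[n]$ (cycle decomposition is a single $n$-cycle), and $\mathcal C_n(321)$ is the set of those avoiding $321$. The standard cycle notation of $\pi$ writes each cycle with its largest element first, as $(m,\pi(m),\pi^2(m),\dots)$, and lists the cycles in increasing order of their largest elements. The fundamental bijection $\theta:S_n\to S_n$ sends $\pi$ to the permutation whose one-line notation is obtained by erasing the parentheses from the standard cycle notation of $\pi$; write $\hat\pi=\theta(\pi)$. (Example: $\pi=964572813=(6,2)(9,3,4,5,7,8,1)$, so $\hat\pi=629345781$.) Vincular patterns: for a sequence $w=w_1\cdots w_N$ of distinct integers, - $w$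 contains $\underline{32}\,\underline{41}$ if there are $i,j$ with $i+2\le j\le N-1$ and $w_{j+1}<w_{i+1}<w_i<w_j$; - $w$ contains $\underline{14}\,\underline{23}$ if there are such $i,j$ with $w_i<w_j<w_{j+1}<w_{i+1}$; - $w$ contains $\underline{41}\,\underline{32}$ if there are such $i,j$ with $w_{i+1}<w_{j+1}<w_j<w_i$; - $w$ contains $\underline{23}\,\underline{14}$ if there are such $i,j$ with $w_j<w_i<w_{i+1}<w_{j+1}$; - $w$ contains $\underline{23}\,\underline{1}$ if there is $i$ with $i+1\le N-1$ and $w_N<w_i<w_{i+1}$ (the ''1'' must be the last entry); - $w$ contains $\underline{1}\,\underline{32}$ if there is $j$ with $2\le j\le N-1$ and $w_1<w_{j+1}<w_j$ (the ''1'' must be the first entry). $w$ avoids a pattern if it does not contain it. *)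

(* Defs.v *)
(* Permutations of [n] are modelled as {perm 'I_n} (values 0..n-1);
   one-line notations are produced as seq nat with values shifted by +1, i.e. in 1..n. *)
From mathcomp Require Import all_boot all_order all_fingroup.
Set Implicit Arguments. Unset Strict Implicit. Unset Printing Implicit Defensive.

Definition oneline n (s : {perm 'I_n}) : seq nat :=
  [seq (val (s i)).+1 | i <- enum 'I_n].

Definition cyclic_perm n (s : {perm 'I_n}) : Prop := #|porbits s| = 1.

Definition contains321 (w : seq nat) : Prop :=
  exists i j k, [/\ i < j, j < k, k < size w &
    nth 0 w k < nth 0 w j < nth 0 w i].

Definition cycle_max n (s : {perm 'I_n}) (m : 'I_n) : bool :=
  [forall j : 'I_n, fconnect s m j ==> (val j <= val m)].

Definition cycle_of n (s : {perm 'I_n}) (m : 'I_n) : seq 'I_n :=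
  traject s m (fingraph.order s m).

(* fundamental bijection: erase parentheses of the standard cycle notation
   (cycles written from their maximum, listed by increasing maxima);
   values shifted to 1..n *)
Definition hat n (s : {perm 'I_n}) : seq nat :=
  flatten [seq [seq (val x).+1 | x <- cycle_of s m]
          | m <- enum 'I_n & cycle_max s m].

(* vincular patterns, 0-based indices: positions i, i+1, j, j+1 with i+2 <= j, j+1 <= N-1 *)
Definition contains_vinc (P : nat -> nat -> nat -> nat -> Prop) (w : seq nat) : Prop :=
  exists i j, [/\ i.+2 <= j, j.+1 < size w &
    P (nth 0 w i) (nth 0 w i.+1) (nth 0 w j) (nth 0 w j.+1)].

Definition contains_3241 := contains_vinc (fun a b c d => d < b /\ b < a /\ a < c).
Definition contains_1423 := contains_vinc (fun a b c d => a < c /\ c < d /\ d < b).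
Definition contains_4132 := contains_vinc (fun a b c d => b < d /\ d < c /\ c < a).
Definition contains_2314 := contains_vinc (fun a b c d => c < a /\ a < b /\ b < d).

Definition contains_231 (w : seq nat) : Prop :=
  exists i, i.+2 < size w /\ nth 0 w (size w).-1 < nth 0 w i < nth 0 w i.+1.

(* Main.v *)
Require Import Defs.
From mathcomp Require Import all_boot all_order all_fingroup zify.
Set Implicit Arguments. Unset Strict Implicit. Unset Printing Implicit Defensive.

Definition CC n (s : {perm 'I_n.+1}) := forall x, fconnect s ord_max x.

Lemma fcon_porbit n (s : {perm 'I_n.+1}) x y : fconnect s x y = (y \in porbit s x).
Proof.
apply/idP/porbitP => [H|[i ->]]; last by rewrite permX fconnect_iter.
by exists (findex s x y); rewrite permX iter_findex.
Qed.

Lemma cyclicC n (s : {perm 'I_n.+1}) : cyclic_perm s <-> CC s.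
Proof.
rewrite /cyclic_perm /CC; split.
- move/eqP/cards1P=> [X hX] x.
  have h1 : porbit s x \in porbits s by apply: imset_f.
  have h2 : porbit s ord_max \in porbits s by apply: imset_f.
  rewrite hX !in_set1 in h1 h2.
  by rewrite fcon_porbit (eqP h2) -(eqP h1) porbit_id.
- move=> H; apply/eqP/cards1P; exists (porbit s ord_max).
  apply/setP=> X; rewrite in_set1; apply/imsetP/eqP => [[x _ ->]|->].
    by apply/eqP; rewrite eq_porbit_mem -fcon_porbit.
  by exists ord_max.
Qed.

Lemma Csym n (s : {perm 'I_n.+1}) : CC s -> forall x y, fconnect s x y.
Proof.
move=> H x y; apply: (connect_trans (y:=ord_max)); last exact: H.
by rewrite fconnect_sym; [exact: H | exact: perm_inj].
Qed.

Lemma ordC n (s : {perm 'I_n.+1}) : CC s -> fingraph.order s ord_max = n.+1.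
Proof.
move=> H; rewrite /fingraph.order -[RHS](card_ord n.+1); apply: eq_card => x.
by rewrite /in_mem /= H.
Qed.

Lemma hatC n (s : {perm 'I_n.+1}) : CC s ->
  hat s = [seq (val x).+1 | x <- traject s ord_max n.+1].
Proof.
move=> H; rewrite /hat.
have -> : [seq m <- enum 'I_n.+1 | cycle_max s m] = [:: ord_max].
  have e1 : (@ord_max n) \in enum 'I_n.+1 by rewrite mem_enum.
  rewrite -(filter_pred1_uniq (enum_uniq 'I_n.+1) e1).
  apply: eq_filter => m /=; apply/idP/eqP.
  - move/forallP/(_ ord_max); rewrite Csym //= => h.
    apply/val_inj => /=; have := ltn_ord m; lia.
  - move=> ->; apply/forallP=> j; apply/implyP=> _ /=; have := ltn_ord j; lia.
by rewrite /= cats0 /cycle_of ordC.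
Qed.

Lemma size_hat n (s : {perm 'I_n.+1}) : CC s -> size (hat s) = n.+1.
Proof. by move=> H; rewrite hatC // size_map size_traject. Qed.

Lemma hatnth n (s : {perm 'I_n.+1}) : CC s -> forall i, i < n.+1 ->
  nth 0 (hat s) i = (nat_of_ord (iter i s ord_max)).+1.
Proof.
by move=> H i hi; rewrite hatC // (nth_map ord_max) ?size_traject // nth_traject.
Qed.

Lemma iter_last n (s : {perm 'I_n.+1}) : CC s -> s (iter n s ord_max) = ord_max.
Proof.
move=> H; have := iter_order (@perm_inj _ s) ord_max; rewrite ordC //.
Qed.

Lemma tsurj n (s : {perm 'I_n.+1}) : CC s -> forall x, exists2 i, i < n.+1 & iter i s ord_max = x.
Proof.
move=> H x; exists (findex s ord_max x); last exact: iter_findex.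
by have := findex_max (H x); rewrite ordC.
Qed.

Lemma hat0 n (s : {perm 'I_n.+1}) : nth 0 (hat s) 0 = n.+1 -> CC s.
Proof.
set L := [seq m <- enum 'I_n.+1 | cycle_max s m].
have sortedL : sorted (fun a b : 'I_n.+1 => val a < val b) L.
  apply: sorted_filter; first by move=> ? ? ?; apply: ltn_trans.
  have : sorted ltn (map val (enum 'I_n.+1)) by rewrite val_enum_ord iota_ltn_sorted.
  by rewrite sorted_map.
move=> H0 x.
have [m fxm mmax] := @arg_maxnP _ x (fconnect s x) val (connect0 _ x).
have cm : cycle_max s m.
  apply/forallP=> j; apply/implyP=> hj; apply: mmax.
  exact: connect_trans fxm hj.
have mL : m \in L by rewrite mem_filter cm mem_enum.
rewrite /hat -/L in H0.
case eL: L => [|m0 L'] in H0 sortedL mL; first by [].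
have hm0 : nat_of_ord m0 = n.
  move: H0; rewrite /= /cycle_of.
  have := fingraph.order_gt0 s m0.
  case: (fingraph.order s m0) => [|k] //.
  rewrite /= => h; lia.
have hmn : nat_of_ord m = n.
  move: mL; rewrite inE => /orP [/eqP -> //|hm].
  have := order_path_min (fun a b c => @ltn_trans (val a) (val b) (val c)) sortedL.
  move/allP/(_ m hm) => /= h; have := ltn_ord m; move: h hm0; clear; lia.
have -> : ord_max = m by apply/val_inj.
rewrite fconnect_sym //; exact: perm_inj.
Qed.

Definition Einv n (s : {perm 'I_n.+1}) := exists x y : 'I_n.+1,
  [/\ x < y, x < s x, y < s y & s y < s x].
Definition Dinv n (s : {perm 'I_n.+1}) := exists x y : 'I_n.+1,
  [/\ x < y, s x < x, s y < y & s y < s x].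

Lemma oneline_nth n (s : {perm 'I_n.+1}) i (hi : i < n.+1) :
  nth 0 (oneline s) i = (val (s (Ordinal hi))).+1.
Proof.
rewrite /oneline (nth_map ord0) ?size_enum_ord //.
by have := nth_ord_enum ord0 (Ordinal hi) => /= ->.
Qed.

Lemma oneline_nth' n (s : {perm 'I_n.+1}) (i : 'I_n.+1) :
  nth 0 (oneline s) i = (val (s i)).+1.
Proof. by rewrite /oneline (nth_map ord0) ?size_enum_ord // nth_ord_enum. Qed.

Lemma c321P n (s : {perm 'I_n.+1}) : contains321 (oneline s) <->
  exists i j k : 'I_n.+1, [/\ i < j, j < k & s k < s j < s i].
Proof.
split.
- move=> [i [j [k [hij hjk hk hv]]]].
  rewrite size_map size_enum_ord in hk.
  have hj : j < n.+1 by lia.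
  have hi : i < n.+1 by lia.
  rewrite !oneline_nth !ltnS in hv.
  by exists (Ordinal hi), (Ordinal hj), (Ordinal hk).
- move=> [i [j [k [hij hjk hv]]]]; exists i, j, k; split => //.
    by rewrite size_map size_enum_ord.
  by rewrite !oneline_nth' !ltnS.
Qed.

Lemma card_map n (s : {perm 'I_n.+1}) (A B : {set 'I_n.+1}) :
  {in A, forall k, s k \in B} -> #|A| <= #|B|.
Proof.
move=> H; rewrite -(card_imset A (@perm_inj _ s)); apply: subset_leq_card.
by apply/subsetP => _ /imsetP [k kA ->]; exact: H.
Qed.

Lemma E321 n (s : {perm 'I_n.+1}) : Einv s ->
  exists i j k : 'I_n.+1, [/\ i < j, j < k & s k < s j < s i].
Proof.
move=> [x [y [hxy hx hy hs]]].
case: (boolP [exists k : 'I_n.+1, (y < k) && (s k < s y)]) => [/existsP [k /andP [hk1 hk2]]|].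
  by exists x, y, k; rewrite hxy hk1 hk2 hs.
move/existsPn => hn; exfalso.
pose A := [set k : 'I_n.+1 | (y < k) || (k == x)].
pose B := [set v : 'I_n.+1 | s y < v].
pose Y := [set k : 'I_n.+1 | y < k].
have h1 : #|A| <= #|B|.
  apply: (@card_map n s A B) => k; rewrite /A /B !inE => /orP [hk|/eqP ->] //.
  have := hn k; rewrite hk /= -leqNgt leq_eqVlt => /orP [/eqP e|//].
  have : s k = s y by apply/val_inj.
  by move/perm_inj => e2; move: hk; rewrite e2 ltnn.
have h2 : #|B| < #|Y|.
  apply: proper_card; apply/properP; split.
    by apply/subsetP => v; rewrite !inE; apply: ltn_trans.
  by exists (s y); rewrite !inE ?ltnn.
have h3 : #|Y| < #|A|.
  apply: proper_card; apply/properP; split.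
    by apply/subsetP => v; rewrite !inE => ->.
  by exists x; rewrite !inE ?eqxx ?orbT // -leqNgt ltnW.
by have := leq_ltn_trans h1 (ltn_trans h2 h3); rewrite ltnn.
Qed.

Lemma D321 n (s : {perm 'I_n.+1}) : Dinv s ->
  exists i j k : 'I_n.+1, [/\ i < j, j < k & s k < s j < s i].
Proof.
move=> [x [y [hxy hx hy hs]]].
case: (boolP [exists k : 'I_n.+1, (k < x) && (s x < s k)]) => [/existsP [k /andP [hk1 hk2]]|].
  by exists k, x, y; rewrite hxy hk1 hk2 hs.
move/existsPn => hn; exfalso.
pose A := [set k : 'I_n.+1 | (k < x) || (k == y)].
pose B := [set v : 'I_n.+1 | v < s x].
pose X := [set k : 'I_n.+1 | k < x].
have h1 : #|A| <= #|B|.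
  apply: (@card_map n s A B) => k; rewrite /A /B !inE => /orP [hk|/eqP ->] //.
  have := hn k; rewrite hk /= -leqNgt leq_eqVlt => /orP [/eqP e|//].
  have : s k = s x by apply/val_inj.
  by move/perm_inj => e2; move: hk; rewrite e2 ltnn.
have h2 : #|B| < #|X|.
  apply: proper_card; apply/properP; split.
    by apply/subsetP => v; rewrite !inE => hv; apply: ltn_trans hv hx.
  by exists (s x); rewrite !inE ?ltnn.
have h3 : #|X| < #|A|.
  apply: proper_card; apply/properP; split.
    by apply/subsetP => v; rewrite !inE => ->.
  by exists y; rewrite !inE ?eqxx ?orbT // -leqNgt ltnW.
by have := leq_ltn_trans h1 (ltn_trans h2 h3); rewrite ltnn.
Qed.

Lemma c321_inv n (s : {perm 'I_n.+1}) : CC s ->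
  (exists i j k : 'I_n.+1, [/\ i < j, j < k & s k < s j < s i]) -> Einv s \/ Dinv s.
Proof.
move=> HC [i [j [k [hij hjk /andP [h1 h2]]]]].
case: (ltngtP (s j) j) => hj.
- right; exists j, k; split => //; lia.
- left; exists i, j; split => //; lia.
- exfalso.
  have fix1 : forall z, fconnect s j z -> z = j.
    move=> z /iter_findex <-; rewrite -permX; apply: permX_fix; exact/val_inj.
  have := fix1 i (Csym HC j i) => e; move: hij; by rewrite e ltnn.
Qed.

Lemma vincP n (s : {perm 'I_n.+1}) (P : nat -> nat -> nat -> nat -> Prop) : CC s ->
  contains_vinc P (hat s) -> exists i j, [/\ i.+2 <= j, j.+1 < n.+1 &
   P (nat_of_ord (iter i s ord_max)).+1 (nat_of_ord (s (iter i s ord_max))).+1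
     (nat_of_ord (iter j s ord_max)).+1 (nat_of_ord (s (iter j s ord_max))).+1].
Proof.
move=> HC [i [j [hij hj hP]]]; rewrite size_hat // in hj.
have hi : i < n.+1 by lia.
have hi1 : i.+1 < n.+1 by lia.
have hj0 : j < n.+1 by lia.
rewrite (hatnth HC hi) (hatnth HC hi1) (hatnth HC hj0) (hatnth HC hj) in hP.
by exists i, j.
Qed.

Lemma vincB n (s : {perm 'I_n.+1}) (P : nat -> nat -> nat -> nat -> Prop) i j : CC s ->
  i.+2 <= j -> j.+1 < n.+1 ->
   P (nat_of_ord (iter i s ord_max)).+1 (nat_of_ord (s (iter i s ord_max))).+1
     (nat_of_ord (iter j s ord_max)).+1 (nat_of_ord (s (iter j s ord_max))).+1 ->
  contains_vinc P (hat s).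
Proof.
move=> HC hij hj hP; exists i, j; rewrite size_hat //; split => //.
have hi : i < n.+1 by lia.
have hi1 : i.+1 < n.+1 by lia.
have hj0 : j < n.+1 by lia.
by rewrite (hatnth HC hi) (hatnth HC hi1) (hatnth HC hj0) (hatnth HC hj).
Qed.

Lemma pat_inv n (s : {perm 'I_n.+1}) : CC s ->
  contains_3241 (hat s) \/ contains_1423 (hat s) \/ contains_4132 (hat s) \/
  contains_2314 (hat s) \/ contains_231 (hat s) -> Einv s \/ Dinv s.
Proof.
move=> HC [h|[h|[h|[h|h]]]].
- move/(vincP HC): h => [i [j [_ _ /= [h1 [h2 h3]]]]]; rewrite !ltnS in h1 h2 h3.
  right; exists (iter i s ord_max), (iter j s ord_max); split; eauto using ltn_trans.
- move/(vincP HC): h => [i [j [_ _ /= [h1 [h2 h3]]]]]; rewrite !ltnS in h1 h2 h3.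
  left; exists (iter i s ord_max), (iter j s ord_max); split; eauto using ltn_trans.
- move/(vincP HC): h => [i [j [_ _ /= [h1 [h2 h3]]]]]; rewrite !ltnS in h1 h2 h3.
  right; exists (iter j s ord_max), (iter i s ord_max); split; eauto using ltn_trans.
- move/(vincP HC): h => [i [j [_ _ /= [h1 [h2 h3]]]]]; rewrite !ltnS in h1 h2 h3.
  left; exists (iter j s ord_max), (iter i s ord_max); split; eauto using ltn_trans.
- move: h => [i []]; rewrite size_hat // => hi /andP [h1 h2].
  have hi0 : i < n.+1 by lia.
  have hi1 : i.+1 < n.+1 by lia.
  rewrite /= (hatnth HC hi0) (hatnth HC hi1) (hatnth HC (ltnSn n)) /= in h1 h2.
  rewrite !ltnS in h1 h2.
  have e1 := iter_last HC.
  have hne : nat_of_ord (s (iter i s ord_max)) != n.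
    apply/negP => /eqP e.
    have : s (iter i s ord_max) = s (iter n s ord_max) by apply/val_inj; rewrite /= e e1.
    by move/perm_inj => e2; move: h1; rewrite e2 ltnn.
  have hti := ltn_ord (iter i s ord_max).
  have hsi := ltn_ord (s (iter i s ord_max)).
  left; exists (iter n s ord_max), (iter i s ord_max); rewrite e1 /=.
  move: h1 h2 hne hti hsi.
  move: (nat_of_ord (iter n s ord_max)) (nat_of_ord (iter i s ord_max)) (nat_of_ord (s (iter i s ord_max))).
  move=> a b c h1 h2 /eqP h3 h4 h5; split; lia.
Qed.

Lemma inv_pat n (s : {perm 'I_n.+1}) : CC s -> Einv s \/ Dinv s ->
  contains_3241 (hat s) \/ contains_1423 (hat s) \/ contains_4132 (hat s) \/
  contains_2314 (hat s) \/ contains_231 (hat s).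
Proof.
move=> HC.
have e1 := iter_last HC.
have tS : forall k, iter k.+1 s ord_max = s (iter k s ord_max) by [].
case=> [[x [y [hxy hx hy hs]]]|[x [y [hxy hx hy hs]]]];
  have [i hi ei] := tsurj HC x; have [j hj ej] := tsurj HC y; subst x y.
- case: (eqVneq i n) => [ein|nin].
  + subst i; rewrite e1 /= in hx hs.
    have hjn : j.+2 < n.+1.
      case: (ltngtP j.+2 n.+1) => // h.
        have ejn : j = n by lia.
        by move: hxy; rewrite ejn ltnn.
      have : iter j.+1 s ord_max = iter n s ord_max by rewrite (_ : j.+1 = n) //; lia.
      rewrite tS => e; move: hy hxy; rewrite e.
      move: (nat_of_ord (iter j s ord_max)) (nat_of_ord (iter n s ord_max)) => a b; lia.
    right; right; right; right; exists j; rewrite size_hat //; split => //.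
    have hj1 : j.+1 < n.+1 by lia.
    rewrite /= (hatnth HC (ltnSn n)) (hatnth HC hj) (hatnth HC hj1) tS !ltnS.
    by rewrite hxy hy.
  + have hin : i < n by lia.
    have hjn : j < n.
      case: (ltngtP j n) => // h; first lia.
      subst j; move: hs; rewrite e1 /=; have := ltn_ord (s (iter i s ord_max)).
      move: (nat_of_ord (s (iter i s ord_max))) => a; lia.
    case: (ltngtP i j) => hij.
    * have hij2 : i.+2 <= j.
        case: (eqVneq j i.+1) => [e|ne]; last lia.
        subst j; move: hy hs; rewrite tS.
        move: (nat_of_ord (s (iter i s ord_max))) (nat_of_ord (s (s (iter i s ord_max)))) => a b; lia.
      right; left; apply: (vincB (i:=i) (j:=j) HC hij2); first lia.
      rewrite /= !ltnS; split => //; split => //.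
    * have hji2 : j.+2 <= i.
        case: (eqVneq i j.+1) => [e|ne]; last lia.
        subst i; move: hxy hy; rewrite tS.
        move: (nat_of_ord (s (iter j s ord_max))) (nat_of_ord (iter j s ord_max)) => a b; lia.
      right; right; right; left; apply: (vincB (i:=j) (j:=i) HC hji2); first lia.
      rewrite /= !ltnS; split => //; split => //.
    * by subst j; move: hxy; rewrite ltnn.
- have hin : i < n.
    case: (ltngtP i n) => // h; first lia.
    subst i; move: hx; rewrite e1 /=; have := ltn_ord (iter n s ord_max).
    move: (nat_of_ord (iter n s ord_max)) => a; lia.
  have hjn : j < n.
    case: (ltngtP j n) => // h; first lia.
    subst j; move: hy; rewrite e1 /=; have := ltn_ord (iter n s ord_max).
    move: (nat_of_ord (iter n s ord_max)) => a; lia.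
  case: (ltngtP i j) => hij.
  + have hij2 : i.+2 <= j.
      case: (eqVneq j i.+1) => [e|ne]; last lia.
      subst j; move: hxy hx; rewrite tS.
      move: (nat_of_ord (s (iter i s ord_max))) (nat_of_ord (iter i s ord_max)) => a b; lia.
    left; apply: (vincB (i:=i) (j:=j) HC hij2); first lia.
    rewrite /= !ltnS; split => //; split => //.
  + have hji2 : j.+2 <= i.
      case: (eqVneq i j.+1) => [e|ne]; last lia.
      subst i; move: hx hs; rewrite tS.
      move: (nat_of_ord (s (iter j s ord_max))) (nat_of_ord (s (s (iter j s ord_max)))) => a b; lia.
    right; right; left; apply: (vincB (i:=j) (j:=i) HC hji2); first lia.
    rewrite /= !ltnS; split => //; split => //.
  + by subst j; move: hxy; rewrite ltnn.
Qed.

Unset Implicit Arguments.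

Theorem mainTheorem1 (n : nat) (hn : 1 <= n) (s : {perm 'I_n}) :
  (cyclic_perm s /\ ~ contains321 (oneline s)) <->
  (nth 0 (hat s) 0 = n /\
   [/\ ~ contains_3241 (hat s),
       ~ contains_1423 (hat s),
       ~ contains_4132 (hat s),
       ~ contains_2314 (hat s) &
       ~ contains_231 (hat s)]).
Proof.
case: n hn s => [//|n] _ s.
split.
- move=> [cyc n321]; have HC := (cyclicC s).1 cyc.
  split; first by rewrite (hatnth HC (ltn0Sn n)).
  have nEI : ~ (Einv s \/ Dinv s).
    by case=> h; apply: n321; apply/c321P; [exact: E321 | exact: D321].
  split => h; apply: nEI; apply: (pat_inv HC); tauto.
- move=> [h0 [n1 n2 n3 n4 n5]]; have HC := hat0 h0.
  split; first exact/cyclicC.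
  move/c321P/(c321_inv HC)/(inv_pat HC); tauto.
Qed.
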